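(* Let $V_\pm$ be real symmetric $n\times n$ matrices with all eigenvalues nonnegative, and let $\nu_{\min}\ge 0$ be the smallest eigenvalue of $V_+$ and $V_-$. For any $\lambda<\nu_{\min}$, the spectrum of $$\tilde{\mathcal W}^-(\lambda):=-(R^-+iS^-(\lambda))(R^--iS^-(\lambda))^{-1}(R^+-iS^+(\lambda))(R^++iS^+(\lambda))^{-1}$$ does not include $-1$.
   Context: Let $\nu_1^\pm\le\dots\le\nu_n^\pm$ be the eigenvalues of $V_\pm$ with orthonormal eigenvectors $r_j^\pm$. For $\lambda<\nu_{\min}$, $\mu^\pm_j(\lambda)=-\sqrt{\nu^\pm_{n+1-j}-\lambda}$ and $\mu^\pm_{n+j}(\lambda)=\sqrt{\nu_j^\pm-\lambda}$, $j=1,\dots,n$. $R^-=(r^-_1\ r^-_2\ \cdots\ r^-_n)$, $S^-(\lambda)=(\mu^-_{n+1}(\lambda)r^-_1\ \cdots\ \mu^-_{2n}(\lambda)r^-_n)$, $R^+=(r^+_n\ r^+_{n-1}\ \cdots\ r^+_1)$, $S^+(\lambda)=(\mu^+_1(\lambda)r^+_n\ \mu^+_2(\lambda)r^+_{n-1}\ \cdots\ \mu^+_n(\lambda)r^+_1)$ (columns listed). (In this setting the paper works with $V_\pm=\lim_{x\to\pm\infty}V(x)$ for a continuous symmetric potential $V$ satisfying an integrability condition, but the claim involves only $V_\pm$.) *)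

(* Defs.v *)
From HB Require Import structures.
From mathcomp Require Import all_boot all_order all_algebra.
From mathcomp Require Import complex reals.
Set Implicit Arguments. Unset Strict Implicit. Unset Printing Implicit Defensive.
Import Order.TTheory GRing.Theory Num.Theory.
Local Open Scope ring_scope.

(* Matrix dimension is n.+1 (n.+1 x n.+1 real matrices); indices 0..n
   correspond to the paper's 1..n+1. Eigenvectors are column vectors
   r j : 'cV_(n.+1). *)

(* mu^pm_j(lambda), j = 1..n  (0-indexed: j : 'I_n.+1), negative branch:
   mu_j = - sqrt(nu_{n+1-j} - lambda) *)
Definition mu_lo (n : nat) (R : realType) (nu : 'I_n.+1 -> R) (lam : R)
  (j : 'I_n.+1) : R := - Num.sqrt (nu (rev_ord j) - lam).

(* mu^pm_{n+j}(lambda) = sqrt(nu_j - lambda) *)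
Definition mu_hi (n : nat) (R : realType) (nu : 'I_n.+1 -> R) (lam : R)
  (j : 'I_n.+1) : R := Num.sqrt (nu j - lam).

Definition cols (n : nat) (R : realType) (c : 'I_n.+1 -> 'cV[R]_n.+1)
  : 'M[R]_n.+1 := \matrix_(i, j) c j i 0.

Definition Rminus n (R : realType) (r : 'I_n.+1 -> 'cV[R]_n.+1) :=
  cols r.
Definition Sminus n (R : realType) (nu : 'I_n.+1 -> R)
  (r : 'I_n.+1 -> 'cV[R]_n.+1) (lam : R) :=
  cols (fun j => mu_hi nu lam j *: r j).
Definition Rplus n (R : realType) (r : 'I_n.+1 -> 'cV[R]_n.+1) :=
  cols (fun j => r (rev_ord j)).
Definition Splus n (R : realType) (nu : 'I_n.+1 -> R)
  (r : 'I_n.+1 -> 'cV[R]_n.+1) (lam : R) :=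
  cols (fun j => mu_lo nu lam j *: r (rev_ord j)).

Definition cplx n (R : realType) (A B : 'M[R]_n.+1) : 'M[R[i]]_n.+1 :=
  \matrix_(i, j) (Complex (A i j) (B i j)).

Definition Wtilde n (R : realType) (num nup : 'I_n.+1 -> R)
  (rm rp : 'I_n.+1 -> 'cV[R]_n.+1) (lam : R) : 'M[R[i]]_n.+1 :=
  - (cplx (Rminus rm) (Sminus num rm lam)
     *m invmx (cplx (Rminus rm) (- Sminus num rm lam))
     *m cplx (Rplus rp) (- Splus nup rp lam)
     *m invmx (cplx (Rplus rp) (Splus nup rp lam))).

Definition ordered_orthonormal_eigensystem n (R : realType)
  (V : 'M[R]_n.+1) (nu : 'I_n.+1 -> R) (r : 'I_n.+1 -> 'cV[R]_n.+1) : Prop :=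
  [/\ forall j, V *m r j = nu j *: r j,
      forall i j, ((r i)^T *m r j) = (i == j)%:R%:M &
      forall i j : 'I_n.+1, (i <= j)%N -> nu i <= nu j].

(* Main.v *)
Require Import Defs.
From HB Require Import structures.
From mathcomp Require Import all_boot all_order all_algebra.
From mathcomp Require Import complex reals.
From mathcomp Require Import ring.
Set Implicit Arguments. Unset Strict Implicit.
Import Order.TTheory GRing.Theory Num.Theory.
Local Open Scope ring_scope.
Section S.
Variable R : realType.
Local Open Scope complex_scope.
Lemma cE (x a : R) : (x +i* (x * a)) = x%:C * (1 + 'i * a%:C).
Proof. apply/eqP; rewrite eq_complex /=. apply/andP; split; apply/eqP; ring. Qed.
Lemma cne0 (a : R) : (1 + 'i * a%:C) != 0 :> R[i].
Proof. rewrite -[1 + _]mul1r -[1 as X in X * _](_ : (1 : R)%:C = 1) // -cE mul1r. 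
rewrite eq_complex /= negb_and oner_neq0 //. Qed.

Definition rmx m n (A : 'M[R]_(m,n)) : 'M[R[i]]_(m,n) := map_mx (real_complex R) A.
Definition cd k (a : 'I_k -> R) : 'M[R[i]]_k := diag_mx (\row_j (1 + 'i * (a j)%:C)).

Lemma cplx_cd k (X S : 'M[R]_k.+1) a : (forall i j, S i j = X i j * a j) ->
  cplx X S = rmx X *m cd a.
Proof.
move=> hS; apply/matrixP=> i j; rewrite mul_mx_diag !mxE hS cE //.
Qed.

Lemma cd_unit k a : @cd k a \in unitmx.
Proof.
rewrite unitmxE det_diag unitfE; apply/prodf_neq0 => i _; rewrite mxE cne0 //.
Qed.

Lemma orth_unit k (X : 'M[R]_k.+1) : X^T *m X = 1%:M ->
  rmx X \in unitmx /\ rmx X *m (rmx X)^T = 1%:M.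
Proof.
move=> h; have h' : (rmx X)^T *m rmx X = 1%:M by rewrite /rmx map_trmx -map_mxM h map_mx1.
split; first by case: (mulmx1_unit h').
exact: mulmx1C h'.
Qed.

Definition ip k (u w : 'rV[R[i]]_k) := \sum_j u 0 j * (w 0 j)^*.

Lemma ipE k (u w : 'rV[R[i]]_k) : ip u w = (u *m (map_mx conjc w)^T) 0 0.
Proof. rewrite mxE; apply eq_bigr => j _; rewrite !mxE //. Qed.

Lemma conj_rmx m n (X : 'M[R]_(m,n)) : map_mx conjc (rmx X) = rmx X.
Proof. apply/matrixP => i j; rewrite !mxE conjc_real //. Qed.

Lemma ip_orth k (X : 'M[R]_k) u w : rmx X *m (rmx X)^T = 1%:M ->
  ip (u *m rmx X) (w *m rmx X) = ip u w.
Proof.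
move=> h; rewrite !ipE map_mxM conj_rmx trmx_mul mulmxA -(mulmxA u) h mulmx1 //.
Qed.
Lemma rC0 : (0 : R)%:C = 0. Proof. by []. Qed.

Lemma key k (X Y : 'M[R]_k.+1) (d e : 'I_k.+1 -> R) :
  X^T *m X = 1%:M -> Y^T *m Y = 1%:M -> (forall j, 0 < d j) -> (forall j, e j <= 0) ->
  ~~ eigenvalue (- (rmx X *m cd d *m invmx (rmx X *m cd (fun j => - d j))
      *m (rmx Y *m cd (fun j => - e j)) *m invmx (rmx Y *m cd e))) (-1).
Proof.
move=> hX hY dpos eneg; have [uX oX] := orth_unit hX; have [uY oY] := orth_unit hY.
set XC := rmx X; set YC := rmx Y.
apply/eigenvalueP => -[v hv v0].
have uN : XC *m cd (fun j => - d j) \in unitmx by rewrite unitmx_mul uX cd_unit.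
have uQ : YC *m cd e \in unitmx by rewrite unitmx_mul uY cd_unit.
set a := v *m (XC *m cd d) *m invmx (XC *m cd (fun j => -d j)).
have haN : a *m (XC *m cd (fun j => -d j)) = v *m (XC *m cd d) by rewrite /a mulmxKV.
have haP : a *m (YC *m cd (fun j => - e j)) = v *m (YC *m cd e).
  have h1 : a *m (YC *m cd (fun j => - e j)) *m invmx (YC *m cd e) = v.
    by move: hv; rewrite scaleN1r mulmxN => /oppr_inj; rewrite /a !mulmxA.
  by rewrite -h1 mulmxKV.
set p := a - v; set q := a + v.
have hpX : forall j, (p *m XC) 0 j = 'i * (d j)%:C * (q *m XC) 0 j.
  move=> j; have := congr1 (fun M : 'rV[R[i]]_k.+1 => M 0 j) haN; rewrite !mulmxA !mul_mx_diag.
  rewrite /p /q mulmxBl mulmxDl; move: (a *m XC) (v *m XC) => A B.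
  rewrite !mxE raddfN /= => h.
  by apply/eqP; rewrite -subr_eq0; apply/eqP; rewrite -[RHS](subrr (B 0 j * (1 + 'i * (d j)%:C))) -{1}h; ring.
have hpY : forall j, (p *m YC) 0 j = 'i * (e j)%:C * (q *m YC) 0 j.
  move=> j; have := congr1 (fun M : 'rV[R[i]]_k.+1 => M 0 j) haP; rewrite !mulmxA !mul_mx_diag.
  rewrite /p /q mulmxBl mulmxDl; move: (a *m YC) (v *m YC) => A B.
  rewrite !mxE raddfN /= => h.
  by apply/eqP; rewrite -subr_eq0; apply/eqP; rewrite -[RHS](subrr (B 0 j * (1 + 'i * (e j)%:C))) -{1}h; ring.
have hip : ip (p *m XC) (q *m XC) = ip (p *m YC) (q *m YC) by rewrite !ip_orth.
have hs : \sum_j (d j)%:C * ((q *m XC) 0 j * ((q *m XC) 0 j)^*)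
        = \sum_j (e j)%:C * ((q *m YC) 0 j * ((q *m YC) 0 j)^*).
  apply: (@mulfI _ 'i); first by rewrite eq_complex /= negb_and oner_neq0 orbT.
  rewrite !mulr_sumr; move: hip; rewrite /ip.
  under eq_bigr do rewrite hpX; under [X in _ = X -> _]eq_bigr do rewrite hpY.
  move=> h; rewrite (eq_bigr (fun j => 'i * (d j)%:C * (q *m XC) 0 j * ((q *m XC) 0 j)^*)); last by move=> j _; ring.
  by rewrite h; apply: eq_bigr => j _; ring.
have ge : forall j, 0 <= (d j)%:C * ((q *m XC) 0 j * ((q *m XC) 0 j)^*).
  move=> j; apply: mulr_ge0; last exact: mulcJ_ge0.
  by rewrite -rC0 lecR ltW.
have le : 0 >= \sum_j (e j)%:C * ((q *m YC) 0 j * ((q *m YC) 0 j)^*).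
  apply: sumr_le0 => j _; apply: mulr_le0_ge0; last exact: mulcJ_ge0.
  by rewrite -rC0 lecR.
have s0 : \sum_j (d j)%:C * ((q *m XC) 0 j * ((q *m XC) 0 j)^*) == 0.
  by rewrite eq_le hs le /= -hs; apply: sumr_ge0 => j _; exact: ge.
have qX0 : q *m XC = 0.
  apply/matrixP => i j; rewrite (ord1 i) [RHS]mxE.
  move: s0; rewrite psumr_eq0; last by move=> j' _; exact: ge.
  move/allP/(_ j (mem_index_enum _))/implyP/(_ isT).
  rewrite mulf_eq0 mulf_eq0 conjc_eq0 orbb -rC0 (inj_eq (@complexI _)).
  by rewrite (gt_eqF (dpos j)) /= => /eqP.
have q0 : q = 0 by rewrite -[q]mulmx1 -oX mulmxA qX0 mul0mx.
have pX0 : p *m XC = 0.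
  by apply/matrixP => i j; rewrite (ord1 i) hpX qX0 !mxE mulr0.
have p0 : p = 0 by rewrite -[p]mulmx1 -oX mulmxA pX0 mul0mx.
move: v0; suff -> : v = 0 by rewrite eqxx.
have : q - p = v *+ 2 by rewrite /q /p; rewrite opprD opprK addrACA subrr add0r mulr2n.
rewrite q0 p0 subrr => /eqP; rewrite eq_sym -scaler_nat scaler_eq0 pnatr_eq0 /= => /eqP //.
Qed.
End S.

Lemma orth_cols (R : realType) n (r : 'I_n.+1 -> 'cV[R]_n.+1) (f : 'I_n.+1 -> 'I_n.+1) :
  injective f -> (forall i j, ((r i)^T *m r j) = (i == j)%:R%:M) ->
  (cols (fun j => r (f j)))^T *m cols (fun j => r (f j)) = 1%:M.
Proof.
move=> fi h; apply/matrixP => i j.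
have := congr1 (fun M : 'M[R]_1 => M 0 0) (h (f i) (f j)).
rewrite (inj_eq fi) !mxE /= mulr1n => <-.
by apply: eq_bigr => k _; rewrite !mxE.
Qed.

Unset Implicit Arguments. Set Strict Implicit.

Theorem lemma4p5 (R : realType) (n : nat) (Vp Vm : 'M[R]_n.+1)
  (nup num : 'I_n.+1 -> R) (rp rm : 'I_n.+1 -> 'cV[R]_n.+1) (lam : R) :
  Vp^T = Vp -> Vm^T = Vm ->
  (forall a : R, eigenvalue Vp a -> 0 <= a) ->
  (forall a : R, eigenvalue Vm a -> 0 <= a) ->
  ordered_orthonormal_eigensystem Vp nup rp ->
  ordered_orthonormal_eigensystem Vm num rm ->
  lam < Num.min (nup ord0) (num ord0) ->
  ~~ eigenvalue (Wtilde num nup rm rp lam) (-1).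
Proof.
move=> _ _ _ _ [_ orp lep] [_ orm lem]; rewrite lt_min => /andP[lp lm].
rewrite /Wtilde.
rewrite (@cplx_cd _ _ _ _ (mu_hi num lam)); last by move=> i j; rewrite !mxE mulrC.
rewrite (@cplx_cd _ _ _ _ (fun j => - mu_hi num lam j)); last by move=> i j; rewrite !mxE mulrN mulrC.
rewrite (@cplx_cd _ _ _ _ (fun j => - mu_lo nup lam j)); last by move=> i j; rewrite !mxE mulrN mulrC.
rewrite (@cplx_cd _ _ _ _ (mu_lo nup lam)); last by move=> i j; rewrite !mxE mulrC.
apply: key.
- exact: (@orth_cols _ _ rm id (fun x y => id) orm).
- exact: (orth_cols rev_ord_inj orp).
- move=> j; rewrite /mu_hi sqrtr_gt0 subr_gt0; apply: (lt_le_trans lm); exact: lem.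
- by move=> j; rewrite /mu_lo oppr_le0 sqrtr_ge0.
Qed.
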